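(* Assume (H_coerc), (H_norm), (H_only-min). There exist $\delta_{Ham}>0$ and $\delta_{Lag}>0$ such that, for every solution $u:\mathbb R\to\mathbb R^n$ of $\mathcal Du''=\nabla V(u)$ defined on all of $\mathbb R$ whose Hamiltonian $\frac12|u'|_{\mathcal D}^2-V(u)$ lies in $[-\delta_{Ham},\delta_{Ham}]$, and for every $x_0\in\mathbb R$: if $[x_0,x_0+1]\cap\Sigma_{Esc}[u]\ne\emptyset$ then $\int_{x_0}^{x_0+1}\bigl(\frac12|u'(x)|_{\mathcal D}^2+V(u(x))\bigr)dx\ge\delta_{Lag}$.
   Context: $n\ge1$; $\mathcal D$ a fixed $n\times n$ real symmetric positive definite matrix; $|v|_{\mathcal D}=\sqrt{v\cdot\mathcal Dv}$; $V:\mathbb R^n\to\mathbb R$ of class $C^k$, $k\ge2$. (H_coerc) $\lim_{R\to\infty}\inf_{|u|\ge R}u\cdot\nabla V(u)/|u|^2>0$. (H_norm) $V$ has a nondegenerate minimum point in $V^{-1}(\{0\})$. (H_only-min) every critical point of $V$ in $V^{-1}(\{0\})$ has positive definite Hessian. $\mathcal M_0$ = critical points of $V$ in $V^{-1}(\{0\})$. Let $\lambda_{\min}$ ($\lambda_{\max}$) be the minimum (maximum) eigenvalue among all $D^2V(m)$, $m\in\mathcal M_0$; $d_{Esc}>0$ is fixed small enough that for every $m\in\mathcal M_0$ and $|u-m|_{\mathcal D}\le d_{Esc}$, all eigenvalues of $D^2V(u)$ lie in $[\lambda_{\min}/2,2\lambda_{\max}]$. $\Sigma_{Esc}[u]=\{x\in\mathbb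 R:|u(x)-m|_{\mathcal D}>d_{Esc}\text{ for all }m\in\mathcal M_0\}$. *)

(* Defs.v *)
From mathcomp Require Import ssreflect ssrfun ssrbool eqtype ssrnat seq fintype bigop.
From Stdlib Require Import Reals.
Open Scope R_scope.

Definition Rn (n : nat) := 'I_n -> R.
Definition Mat (n : nat) := 'I_n -> 'I_n -> R.

Definition vzero {n} : Rn n := fun _ => 0.
Definition vadd {n} (u v : Rn n) : Rn n := fun i => u i + v i.
Definition vsub {n} (u v : Rn n) : Rn n := fun i => u i - v i.
Definition vscale {n} (a : R) (u : Rn n) : Rn n := fun i => a * u i.
Definition basis {n} (i : 'I_n) : Rn n := fun j => if j == i then 1 else 0.

Definition dot {n} (u v : Rn n) : R := \big[Rplus/0]_(i < n) (u i * v i).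
Definition vnorm {n} (u : Rn n) : R := sqrt (dot u u).

Definition mulv {n} (A : Mat n) (v : Rn n) : Rn n :=
  fun i => \big[Rplus/0]_(j < n) (A i j * v j).

Definition mat_symmetric {n} (A : Mat n) : Prop := forall i j, A i j = A j i.
Definition vnonzero {n} (v : Rn n) : Prop := exists i, v i <> 0.
Definition mat_posdef {n} (A : Mat n) : Prop :=
  forall v : Rn n, vnonzero v -> 0 < dot v (mulv A v).
Definition mat_nondegenerate {n} (A : Mat n) : Prop :=
  forall v : Rn n, (forall i, mulv A v i = 0) -> forall i, v i = 0.

Definition normD {n} (D : Mat n) (v : Rn n) : R := sqrt (dot v (mulv D v)).

Definition eigenvalue {n} (A : Mat n) (lam : R) : Prop :=
  exists v : Rn n, vnonzero v /\ forall i, mulv A v i = lam * v i.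

Definition cont_Rn {n} (f : Rn n -> R) : Prop :=
  forall x eps, 0 < eps -> exists delta, 0 < delta /\
    forall y, vnorm (vsub y x) < delta -> Rabs (f y - f x) < eps.

Definition is_partial {n} (f : Rn n -> R) (i : 'I_n) (g : Rn n -> R) : Prop :=
  forall x, derivable_pt_lim (fun t => f (vadd x (vscale t (basis i)))) 0 (g x).

Fixpoint Ck (n : nat) (k : nat) (f : Rn n -> R) {struct k} : Prop :=
  cont_Rn f /\
  match k with
  | O => True
  | S m => forall i : 'I_n, exists g, is_partial f i g /\ Ck n m g
  end.

Definition is_gradient {n} (V : Rn n -> R) (gradV : Rn n -> Rn n) : Prop :=
  forall i, is_partial V i (fun x => gradV x i).
Definition is_hessian {n} (gradV : Rn n -> Rn n) (HessV : Rn n -> Mat n) : Prop :=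
  forall i j, is_partial (fun x => gradV x i) j (fun x => HessV x i j).

Definition in_M0 {n} (V : Rn n -> R) (gradV : Rn n -> Rn n) (m : Rn n) : Prop :=
  V m = 0 /\ forall i, gradV m i = 0.

Definition local_min {n} (V : Rn n -> R) (m : Rn n) : Prop :=
  exists r, 0 < r /\ forall y, vnorm (vsub y m) < r -> V m <= V y.

(* (H_coerc): lim_{R->oo} inf_{|u|>=R} u.gradV(u)/|u|^2 > 0 *)
Definition H_coerc {n} (gradV : Rn n -> Rn n) : Prop :=
  exists c R0, 0 < c /\
    forall u, R0 <= vnorm u -> c <= dot u (gradV u) / (vnorm u ^ 2).

Definition H_norm {n} (V : Rn n -> R) (gradV : Rn n -> Rn n) (HessV : Rn n -> Mat n) : Prop :=
  exists m, V m = 0 /\ (forall i, gradV m i = 0) /\ local_min V m /\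
            mat_nondegenerate (HessV m).

Definition H_only_min {n} (V : Rn n -> R) (gradV : Rn n -> Rn n) (HessV : Rn n -> Mat n) : Prop :=
  forall m, in_M0 V gradV m -> mat_posdef (HessV m).

Definition in_Sigma_Esc {n} (D : Mat n) (V : Rn n -> R) (gradV : Rn n -> Rn n)
  (dEsc : R) (u : R -> Rn n) (x : R) : Prop :=
  forall m, in_M0 V gradV m -> normD D (vsub (u x) m) > dEsc.

Definition is_solution {n} (D : Mat n) (gradV : Rn n -> Rn n)
  (u u1 u2 : R -> Rn n) : Prop :=
  (forall x i, derivable_pt_lim (fun y => u y i) x (u1 x i)) /\
  (forall x i, derivable_pt_lim (fun y => u1 y i) x (u2 x i)) /\
  (forall x i, mulv D (u2 x) i = gradV (u x) i).

(* Main.v *)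
From HB Require Import structures.
Require Import Defs.
From mathcomp Require Import ssreflect ssrfun ssrbool eqtype ssrnat seq fintype bigop.
From Stdlib Require Import Reals Lra Lia Classical ClassicalEpsilon FunctionalExtensionality.
Open Scope R_scope.


Lemma Rplus_assoc_ssr : associative Rplus. Proof. move=> x y z; ring. Qed.
HB.instance Definition _ := Monoid.isComLaw.Build R 0 Rplus Rplus_assoc_ssr Rplus_comm Rplus_0_l.

Lemma bigR_le (I : Type) (r : seq I) (F G : I -> R) :
  (forall i, F i <= G i) -> \big[Rplus/0]_(i <- r) F i <= \big[Rplus/0]_(i <- r) G i.
Proof. move=> H; apply: (big_ind2 (fun a b => a <= b)) => //; [lra | move=> *; lra]. Qed.

Lemma bigR_abs (I : Type) (r : seq I) (F : I -> R) :
  Rabs (\big[Rplus/0]_(i <- r) F i) <= \big[Rplus/0]_(i <- r) Rabs (F i).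
Proof.
apply: (big_ind2 (fun a b => Rabs a <= b)).
- rewrite Rabs_R0; lra.
- move=> x1 x2 y1 y2 h1 h2. eapply Rle_trans; [apply Rabs_triang|lra].
- move=> i; lra.
Qed.

Lemma bigR_scale (I : Type) (r : seq I) (a : R) (F : I -> R) :
  \big[Rplus/0]_(i <- r) (a * F i) = a * \big[Rplus/0]_(i <- r) F i.
Proof.
apply: (big_ind2 (fun x y => x = a * y)); [ring | move=> ? ? ? ? -> ->; ring | by []].
Qed.

Lemma bigR_ge0 (I : Type) (r : seq I) (F : I -> R) :
  (forall i, 0 <= F i) -> 0 <= \big[Rplus/0]_(i <- r) F i.
Proof. move=> H; apply: (big_ind (fun a => 0 <= a)) => //; [lra | move=> *; lra]. Qed.

Lemma bigR_const n (c : R) : \big[Rplus/0]_(i < n) c = INR n * c.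
Proof.
rewrite big_const_ord. elim: n => [|n IH]; first by rewrite /=; ring.
rewrite iterS.
rewrite IH S_INR; ring.
Qed.

Lemma bigR_term n (F : 'I_n -> R) j :
  (forall i, 0 <= F i) -> F j <= \big[Rplus/0]_(i < n) F i.
Proof.
move=> H; rewrite (bigD1 j) //=.
have : 0 <= \big[Rplus/0]_(i < n | i != j) F i.
  apply: (big_ind (fun a => 0 <= a)) => //; [lra | move=> *; lra].
move=> h; apply: Rle_trans (_ : F j + 0 <= _); [lra | apply: Rplus_le_compat_l h].
Qed.

Lemma bigR_split (I : Type) (r : seq I) (F G : I -> R) :
  \big[Rplus/0]_(i <- r) (F i + G i) = \big[Rplus/0]_(i <- r) F i + \big[Rplus/0]_(i <- r) G i.
Proof. by rewrite big_split. Qed.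

Lemma abs_le_inv a b : Rabs a <= b -> - b <= a <= b.
Proof. move=> h; have := Rle_abs a; have := Rle_abs (- a); rewrite Rabs_Ropp; lra. Qed.

Lemma abs_lt_inv a b : Rabs a < b -> - b < a < b.
Proof. move=> h; have := Rle_abs a; have := Rle_abs (- a); rewrite Rabs_Ropp; lra. Qed.

Lemma abs_le_intro a b : - b <= a <= b -> Rabs a <= b.
Proof. exact: Rabs_le. Qed.

Lemma abs_lt_intro a b : - b < a < b -> Rabs a < b.
Proof. case=> h1 h2; apply: Rabs_def1; lra. Qed.

Lemma dot_self_ge n (v : Rn n) i : v i ^ 2 <= dot v v.
Proof.
rewrite /dot. have -> : v i ^ 2 = v i * v i by ring.
apply: (bigR_term _ (fun i => v i * v i) i) => j; nra.
Qed.

Lemma dot_self_ge0 n (v : Rn n) : 0 <= dot v v.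
Proof. apply: bigR_ge0 => i; nra. Qed.

Lemma vnorm_bound n (v : Rn n) t : 0 <= t -> (forall i, Rabs (v i) <= t) -> vnorm v <= INR n * t.
Proof.
move=> t0 H. rewrite /vnorm.
have h1 : dot v v <= INR n * (t * t).
  rewrite /dot -bigR_const. apply: bigR_le => i.
  have e := Rsqr_abs (v i). rewrite /Rsqr in e. rewrite e.
  have := H i; have := Rabs_pos (v i); nra.
have hn : 0 <= INR n := pos_INR n.
have h2 : INR n * (t * t) <= (INR n * t) ^ 2.
  have : INR n = 0 \/ 1 <= INR n.
    case: (n) => [|m]; [by left | right; rewrite S_INR; have := pos_INR m; lra].
  case=> e; [rewrite e; nra | nra].
rewrite -(sqrt_pow2 (INR n * t)); last by apply: Rmult_le_pos.
apply: sqrt_le_1_alt. lra.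
Qed.

Definition Kd {n} (D : Mat n) : R := \big[Rplus/0]_(i < n) \big[Rplus/0]_(j < n) Rabs (D i j).

Lemma Kd_ge0 n (D : Mat n) : 0 <= Kd D.
Proof. apply: bigR_ge0 => i; apply: bigR_ge0 => j; apply: Rabs_pos. Qed.

Lemma bil_bound n (D : Mat n) (d w : Rn n) M t : 0 <= M -> 0 <= t ->
  (forall i, Rabs (d i) <= M) -> (forall j, Rabs (w j) <= t) ->
  Rabs (dot d (mulv D w)) <= Kd D * (M * t).
Proof.
move=> M0 t0 Hd Hw. rewrite /dot /mulv /Kd.
eapply Rle_trans; first by apply: bigR_abs.
rewrite Rmult_comm -bigR_scale. apply: bigR_le => i.
rewrite Rabs_mult.
have h1 := bigR_abs _ (index_enum 'I_n) (fun j => D i j * w j).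
have h2 : \big[Rplus/0]_(j <- index_enum 'I_n) Rabs (D i j * w j) <= t * \big[Rplus/0]_(j < n) Rabs (D i j).
  rewrite -bigR_scale. apply: bigR_le => j. rewrite Rabs_mult.
  have := Hw j; have := Rabs_pos (D i j); nra.
have h3 : 0 <= \big[Rplus/0]_(j < n) Rabs (D i j) by apply: bigR_ge0 => j; apply: Rabs_pos.
have h4 := Hd i. have h5 := Rabs_pos (d i).
move: h1 h2 h3 h4 h5. set A := Rabs (\big[Rplus/0]_(j < n) _). set B := \big[Rplus/0]_(j <- _) _.
set C := \big[Rplus/0]_(j < n) _. move=> h1 h2 h3 h4 h5.
have hA : A <= t * C by lra.
have h6 : 0 <= A by apply: Rabs_pos.
have : Rabs (d i) * A <= M * (t * C) by apply: Rmult_le_compat.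
lra.
Qed.

Lemma vzero_dot n (v w : Rn n) : (forall i, v i = 0) -> dot v w = 0.
Proof.
move=> H; rewrite /dot. rewrite (eq_bigr (fun _ => 0)); last by move=> i _; rewrite H; ring.
rewrite bigR_const; ring.
Qed.

Lemma S_ge0 n (D : Mat n) (v : Rn n) : mat_posdef D -> 0 <= dot v (mulv D v).
Proof.
move=> HD. case: (classic (vnonzero v)) => h; first by apply: Rlt_le; apply: HD.
have h' : forall i, v i = 0.
  move=> i; apply: NNPP => hi; apply: h; by exists i.
rewrite vzero_dot //; lra.
Qed.

Lemma normD_sq n (D : Mat n) (v : Rn n) : mat_posdef D -> normD D v ^ 2 = dot v (mulv D v).
Proof. move=> HD; rewrite /normD /= Rmult_1_r sqrt_sqrt //; exact: S_ge0. Qed.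

Lemma argmax_seq (T : eqType) (s : seq T) (f : T -> R) x0 :
  x0 \in s -> exists i0, i0 \in s /\ forall i, i \in s -> f i <= f i0.
Proof.
elim: s x0 => [//|a s IH] x0 _.
case: (boolP (x0 \in s)) => hs.
- have [i0 [hi0 Hm]] := IH x0 hs.
  case: (Rle_dec (f a) (f i0)) => h.
  + exists i0; split; first by rewrite inE hi0 orbT.
    move=> i; rewrite inE => /orP [/eqP -> //| /Hm //].
  + exists a; split; first by rewrite inE eqxx.
    move=> i; rewrite inE => /orP [/eqP -> | /Hm]; lra.
- case: s IH hs => [|b s] IH hs.
  + exists a; split; first by rewrite inE eqxx.
    move=> i; rewrite inE => /eqP ->; lra.
  + have [i0 [hi0 Hm]] := IH b (mem_head b s).
    case: (Rle_dec (f a) (f i0)) => h.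
    * exists i0; split; first by rewrite inE hi0 orbT.
      move=> i; rewrite inE => /orP [/eqP -> //| /Hm //].
    * exists a; split; first by rewrite inE eqxx.
      move=> i; rewrite inE => /orP [/eqP -> | /Hm]; lra.
Qed.

Lemma argmax n (f : 'I_n -> R) : (1 <= n)%nat -> exists i0, forall i, f i <= f i0.
Proof.
case: n f => [//|n] f _.
have [i0 [_ H]] := @argmax_seq _ (enum 'I_n.+1) f ord0 (mem_enum _ _).
exists i0 => i; apply: H; exact: mem_enum.
Qed.

Definition CoordCv {n} (w : nat -> Rn n) (q : Rn n) : Prop :=
  forall i, Un_cv (fun k => w k i) (q i).

Lemma coordcv_unif n (w : nat -> Rn n) q : CoordCv w q ->
  forall d, 0 < d -> exists N : nat, forall k : nat, (leq N k) -> forall i, Rabs (w k i - q i) < d.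
Proof.
move=> H d d0.
have H' : forall i : 'I_n, exists N : nat, forall k : nat, (leq N k) -> Rabs (w k i - q i) < d.
  move=> i; have [N HN] := H i d d0. exists N => k /leP hk. exact: HN.
pose f i := proj1_sig (constructive_indefinite_description _ (H' i)).
exists (\max_(i < n) f i) => k hk i.
apply: (proj2_sig (constructive_indefinite_description _ (H' i))).
have hm : leq (f i) (\max_(j < n) f j) by rewrite (bigD1 i) //= leq_max leqnn.
exact: (leq_trans hm hk).
Qed.

Lemma cont_seq n (f : Rn n -> R) (w : nat -> Rn n) q :
  cont_Rn f -> CoordCv w q -> Un_cv (fun k => f (w k)) (f q).
Proof.
move=> Hf Hw eps e0.
have [d [d0 Hd]] := Hf q eps e0.
have hn := pos_INR n.
set t := d / (INR n + 1).
have t0 : 0 < t by rewrite /t; apply: Rdiv_lt_0_compat; lra.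
have [N HN] := coordcv_unif _ _ _ Hw t t0.
exists N => k /leP hk. rewrite /R_dist /Rdist. apply: Hd.
have := vnorm_bound n (vsub (w k) q) t (Rlt_le _ _ t0) (fun i => Rlt_le _ _ (HN k hk i)).
have : INR n * t < d.
  rewrite /t. have e : INR n * (d / (INR n + 1)) = d * (INR n / (INR n + 1)) by field; lra.
  rewrite e. have : INR n / (INR n + 1) < 1.
    apply (Rmult_lt_reg_r (INR n + 1)); first lra. field_simplify; lra.
  nra.
lra.
Qed.

Lemma sum_cv (I : Type) (r : seq I) (a : nat -> I -> R) (l : I -> R) :
  (forall i, Un_cv (fun k => a k i) (l i)) ->
  Un_cv (fun k => \big[Rplus/0]_(i <- r) a k i) (\big[Rplus/0]_(i <- r) l i).
Proof.
move=> H; elim: r => [|x r IH].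
  rewrite big_nil. have -> : (fun k => \big[Rplus/0]_(i <- [::]) a k i) = (fun _ => 0).
    by apply: functional_extensionality => k; rewrite big_nil.
  move=> eps e0; exists 0%nat => k _; rewrite /R_dist /Rdist Rminus_0_r Rabs_R0; lra.
rewrite big_cons. have -> : (fun k => \big[Rplus/0]_(i <- x :: r) a k i) =
   (fun k => a k x + \big[Rplus/0]_(i <- r) a k i).
  by apply: functional_extensionality => k; rewrite big_cons.
exact: CV_plus.
Qed.

Lemma cv_const (c : R) : Un_cv (fun _ => c) c.
Proof. move=> eps e0; exists 0%nat => k _; rewrite /R_dist /Rdist Rminus_eq_0 Rabs_R0; lra. Qed.

Lemma incr_ge (phi : nat -> nat) : (forall k, (leq (phi k).+1 (phi k.+1))) -> forall k, (leq k (phi k)).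
Proof. move=> H; elim=> [//|k IH]. exact: leq_ltn_trans IH (H k). Qed.

Lemma subseq_cv (u : nat -> R) l (phi : nat -> nat) :
  (forall k, (leq (phi k).+1 (phi k.+1))) -> Un_cv u l -> Un_cv (fun k => u (phi k)) l.
Proof.
move=> Hp Hu eps e0; have [N HN] := Hu eps e0.
exists N => k /leP hk; apply: HN. apply/leP. exact: leq_trans hk (incr_ge _ Hp k).
Qed.

Lemma inv_cv0 (phi : nat -> nat) : (forall k, (leq k (phi k))) ->
  Un_cv (fun k => / (INR (phi k) + 1)) 0.
Proof.
move=> Hp eps e0. have [N [HN HN0]] := archimed_cor1 eps e0.
exists N => k /leP hk. rewrite /R_dist /Rdist Rminus_0_r.
have h1 : INR N <= INR (phi k) by apply: le_INR; apply/leP; exact: leq_trans hk (Hp k).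
have h0 := pos_INR N.
rewrite Rabs_pos_eq; last by apply: Rlt_le; apply: Rinv_0_lt_compat; lra.
have hN1 : 0 < INR N by apply: lt_0_INR.
apply: Rle_lt_trans HN. apply: Rinv_le_contravar; lra.
Qed.

Lemma BW1 (un : nat -> R) B : (forall k, Rabs (un k) <= B) ->
  exists phi : nat -> nat, (forall k, (leq (phi k).+1 (phi k.+1))) /\ exists l, Un_cv (fun k => un (phi k)) l.
Proof.
move=> HB.
have [l Hl] : exists l, ValAdh un l.
  apply: (Bolzano_Weierstrass un (fun c => - B <= c <= B)); first exact: compact_P3.
  move=> k; have := HB k; move/abs_le_inv; lra.
have Hpick : forall N k : nat, exists p, (leq N p) /\ Rabs (un p - l) < / (INR k + 1).
  move=> N k. have hk : 0 < / (INR k + 1) by apply: Rinv_0_lt_compat; have := pos_INR k; lra.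
  have [p [hp1 hp2]] := Hl (disc l (mkposreal _ hk)) N (ex_intro _ (mkposreal _ hk) (fun y h => h)).
  exists p; split; [exact/leP | exact hp2].
pose pick N k := proj1_sig (constructive_indefinite_description _ (Hpick N k)).
have Hpk N k : (leq N (pick N k)) /\ Rabs (un (pick N k) - l) < / (INR k + 1).
  exact: (proj2_sig (constructive_indefinite_description _ (Hpick N k))).
pose phi := fix phi (k : nat) : nat := match k with O => pick O O | S kk => pick (phi kk).+1 k end.
exists phi; split.
  move=> k /=. exact: (proj1 (Hpk _ _)).
exists l. move=> eps e0.
have [N [HN HN0]] := archimed_cor1 eps e0.
exists N => k /leP hk. rewrite /R_dist /Rdist.
have hb : Rabs (un (phi k) - l) < / (INR k + 1) by case: k {hk} => [|k] /=; exact: (proj2 (Hpk _ _)).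
apply: Rlt_trans hb _. apply: Rle_lt_trans HN.
have h1 : INR N <= INR k by apply: le_INR; apply/leP.
have hN1 : 0 < INR N by apply: lt_0_INR.
apply: Rinv_le_contravar; lra.
Qed.

Lemma incr_mono (phi : nat -> nat) : (forall k, leq (phi k).+1 (phi k.+1)) ->
  forall a b, leq a.+1 b -> leq (phi a).+1 (phi b).
Proof.
move=> H a; elim=> [//|b IH] hab.
case: (ltngtP a b) => h.
- exact: ltn_trans (IH h) (H b).
- by move: hab; rewrite ltnS leqNgt h.
- by rewrite h; apply: H.
Qed.

Lemma BWn n (w : nat -> Rn n) B : (forall k i, Rabs (w k i) <= B) ->
  exists phi : nat -> nat, (forall k, leq (phi k).+1 (phi k.+1)) /\
    exists q, CoordCv (fun k => w (phi k)) q.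
Proof.
move=> HB.
suff: forall m : nat, exists phi : nat -> nat, (forall k, leq (phi k).+1 (phi k.+1)) /\
    exists q : Rn n, forall i : 'I_n, leq (i : nat).+1 m -> Un_cv (fun k => w (phi k) i) (q i).
  move=> /(_ n) [phi [Hp [q Hq]]]. exists phi; split => //; exists q => i. exact: Hq.
elim=> [|m [phi [Hp [q Hq]]]].
  exists (fun k : nat => k); split => //; exists (fun _ => 0) => i //.
case: (ltnP m n) => hmn; last first.
  exists phi; split => //; exists q => i hi. apply: Hq. exact: leq_trans (ltn_ord i) hmn.
pose j := Ordinal hmn.
have [psi [Hpsi [l Hl]]] := BW1 (fun k => w (phi k) j) B (fun k => HB _ j).
exists (fun k => phi (psi k)); split.
  move=> k; exact: incr_mono Hp _ _ (Hpsi k).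
exists (fun i => if i == j then l else q i) => i hi.
case: (eqVneq i j) => hij.
  rewrite hij /=. exact: Hl.
apply: (subseq_cv (fun k => w (phi k) i)) => //. apply: Hq.
move: hi; rewrite ltnS leq_eqVlt => /orP [/eqP e|//].
by exfalso; move: hij; apply/negP; rewrite negbK; apply/eqP; apply: val_inj.
Qed.

Lemma dot_cv n (a b : nat -> Rn n) qa qb : CoordCv a qa -> CoordCv b qb ->
  Un_cv (fun k => dot (a k) (b k)) (dot qa qb).
Proof.
move=> Ha Hb. rewrite /dot.
apply: (sum_cv _ (index_enum _) (fun k i => a k i * b k i)) => i.
exact: CV_mult.
Qed.

Lemma mulv_cv n (D : Mat n) (w : nat -> Rn n) q : CoordCv w q ->
  CoordCv (fun k => mulv D (w k)) (mulv D q).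
Proof.
move=> Hw i. rewrite /mulv.
apply: (sum_cv _ (index_enum _) (fun k j => D i j * w k j)) => j.
apply: CV_mult => //; exact: cv_const.
Qed.

Lemma dot_scale_l n (a : R) (v w : Rn n) : dot (vscale a v) w = a * dot v w.
Proof. rewrite /dot -bigR_scale; apply: eq_bigr => i _; rewrite /vscale; ring. Qed.

Lemma mulv_scale n (D : Mat n) (a : R) (v : Rn n) i : mulv D (vscale a v) i = a * mulv D v i.
Proof. rewrite /mulv -bigR_scale; apply: eq_bigr => j _; rewrite /vscale; ring. Qed.

Lemma dot_scale_r n (a : R) (v w : Rn n) : dot v (fun i => a * w i) = a * dot v w.
Proof. rewrite /dot -bigR_scale; apply: eq_bigr => i _; ring. Qed.

Lemma S_scale n (D : Mat n) (a : R) (v : Rn n) :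
  dot (vscale a v) (mulv D (vscale a v)) = a * a * dot v (mulv D v).
Proof.
rewrite dot_scale_l.
have -> : mulv D (vscale a v) = (fun i => a * mulv D v i).
  by apply: functional_extensionality => i; rewrite mulv_scale.
rewrite dot_scale_r; ring.
Qed.

Lemma dot_self_le n (v : Rn n) t : 0 <= t -> (forall i, Rabs (v i) <= t) -> dot v v <= INR n * (t * t).
Proof.
move=> t0 H. rewrite /dot -bigR_const. apply: bigR_le => i.
have e := Rsqr_abs (v i). rewrite /Rsqr in e. rewrite e.
have := H i; have := Rabs_pos (v i); nra.
Qed.

Lemma nonzero_of_dot n (v : Rn n) : 0 < dot v v -> vnonzero v.
Proof.
move=> h; apply: NNPP => hv.
have hz : forall i, v i = 0 by move=> i; apply: NNPP => hi; apply: hv; exists i.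
rewrite vzero_dot in h => //; lra.
Qed.

Lemma alpha_pos n (D : Mat n) : (1 <= n)%nat -> mat_posdef D ->
  exists al, 0 < al /\ forall v : Rn n, al * dot v v <= dot v (mulv D v).
Proof.
move=> Hn HD. apply: NNPP => Hno.
have Hk : forall k : nat, exists w : Rn n, (forall i, Rabs (w i) <= 1) /\ 1 <= dot w w /\
   dot w (mulv D w) < / (INR k + 1) * INR n.
  move=> k. have hk : 0 < / (INR k + 1) by apply: Rinv_0_lt_compat; have := pos_INR k; lra.
  have [v hv] : exists v : Rn n, dot v (mulv D v) < / (INR k + 1) * dot v v.
    apply: NNPP => h. apply: Hno. exists (/ (INR k + 1)); split => // v.
    apply: Rnot_lt_le => h'; apply: h; by exists v.
  have [i0 Hi0] := argmax _ (fun i => Rabs (v i)) Hn.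
  set M := Rabs (v i0).
  have hM : 0 < M.
    case: (Rle_lt_or_eq_dec 0 M (Rabs_pos _)) => // e.
    have hz : forall i, v i = 0.
      move=> i; have := Hi0 i; rewrite -/M -e => h; have := Rabs_pos (v i).
      move=> h2; case: (Req_dec (v i) 0) => // hne; have := Rabs_pos_lt _ hne; lra.
    move: hv; rewrite !vzero_dot //; lra.
  exists (vscale (/ M) v); split; [|split].
  - move=> i; rewrite /vscale Rabs_mult Rabs_inv (Rabs_pos_eq M); last lra.
    have := Hi0 i; rewrite -/M => h.
    apply (Rmult_le_reg_l M) => //. field_simplify; lra.
  - have := dot_self_ge n (vscale (/ M) v) i0. rewrite /vscale.
    have -> : (/ M * v i0) ^ 2 = 1.
      have : v i0 ^ 2 = M ^ 2 by have e := Rsqr_abs (v i0); rewrite /Rsqr in e; rewrite /M /= !Rmult_1_r e.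
      move=> e; field_simplify; [rewrite e; field|]; lra.
    by [].
  - rewrite S_scale.
    have hd : dot (vscale (/ M) v) (vscale (/ M) v) <= INR n * (1 * 1).
      apply: dot_self_le; first lra.
      move=> i; rewrite /vscale Rabs_mult Rabs_inv (Rabs_pos_eq M); last lra.
      have := Hi0 i; rewrite -/M => h.
      apply (Rmult_le_reg_l M) => //. field_simplify; lra.
    rewrite dot_scale_l in hd.
    have : forall x y z : R, x = y * z -> x = y * z by [].
    have e : dot (vscale (/ M) v) (vscale (/ M) v) = / M * / M * dot v v.
      rewrite dot_scale_l /dot -bigR_scale -bigR_scale; apply: eq_bigr => i _; rewrite /vscale; ring.
    have hm2 : 0 < / M * / M by apply: Rmult_lt_0_compat; apply: Rinv_0_lt_compat.
    move: hd; rewrite -dot_scale_l e => hd _.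
    have : / M * / M * dot v (mulv D v) < / M * / M * (/ (INR k + 1) * dot v v).
      by apply: Rmult_lt_compat_l.
    have : / (INR k + 1) * (/ M * / M * dot v v) <= / (INR k + 1) * (INR n * (1 * 1)).
      by apply: Rmult_le_compat_l; lra.
    lra.
pose w k := proj1_sig (constructive_indefinite_description _ (Hk k)).
have Hw k : (forall i, Rabs (w k i) <= 1) /\ 1 <= dot (w k) (w k) /\
   dot (w k) (mulv D (w k)) < / (INR k + 1) * INR n.
  exact: (proj2_sig (constructive_indefinite_description _ (Hk k))).
have [phi [Hp [q Hq]]] := BWn n w 1 (fun k => proj1 (Hw k)).
have h1 : 1 <= dot q q.
  eapply (@Rle_cv_lim (fun _ : nat => 1%R) (fun k => dot (w (phi k)) (w (phi k))) 1 (dot q q)).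
  - move=> k; exact: (proj1 (proj2 (Hw _))).
  - exact: cv_const.
  - exact: dot_cv.
have h2 : dot q (mulv D q) <= 0.
  have hc : Un_cv (fun k => / (INR (phi k) + 1) * INR n) (0 * INR n).
    apply: CV_mult; [exact: inv_cv0 (incr_ge _ Hp) | exact: cv_const].
  rewrite Rmult_0_l in hc.
  apply: (@Rle_cv_lim (fun k => dot (w (phi k)) (mulv D (w (phi k)))) _ _ _ _ _ hc).
  - move=> k; exact: Rlt_le (proj2 (proj2 (Hw _))).
  - apply: dot_cv => //; exact: mulv_cv.
have h3 : 0 < dot q q by lra.
have := HD q (nonzero_of_dot _ _ h3). lra.
Qed.

Lemma near_cv n (a b : nat -> Rn n) (e : nat -> R) q : CoordCv a q ->
  (forall k i, Rabs (b k i - a k i) <= e k) -> Un_cv e 0 -> CoordCv b q.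
Proof.
move=> Ha Hb He i eps e0.
have e2 : eps / 2 > 0 by lra.
have [N1 H1] := Ha i _ e2. have [N2 H2] := He _ e2.
exists (Nat.max N1 N2) => k hk. rewrite /R_dist /Rdist.
have := H1 k ltac:(lia). have := H2 k ltac:(lia). have := Hb k i.
rewrite /R_dist /Rdist Rminus_0_r.
move=> h3 h2 h1. have := Rle_abs (e k). move/abs_le_inv: h3 => h3.
move/abs_lt_inv: h1 => h1. move=> h4. apply: abs_lt_intro. lra.
Qed.

Lemma normD_small n (D : Mat n) (HD : mat_posdef D) (v : Rn n) t :
  0 <= t -> (forall i, Rabs (v i) <= t) -> normD D v ^ 2 <= Kd D * (t * t).
Proof.
move=> t0 H. rewrite normD_sq //. have := bil_bound n D v v t t t0 t0 H H.
move/abs_le_inv; lra.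
Qed.

Lemma Klemma n (Hn : (1 <= n)%nat) (D : Mat n) (HD : mat_posdef D)
  (V : Rn n -> R) (gradV : Rn n -> Rn n) (HVc : cont_Rn V)
  (Hgc : forall i, cont_Rn (fun x => gradV x i)) (dEsc : R) (HdEsc : 0 < dEsc) (B : R) :
  exists rho, 0 < rho /\ rho <= 1 /\ forall p : Rn n, (forall i, Rabs (p i) <= B) ->
   (forall m, in_M0 V gradV m -> normD D (vsub p m) > dEsc) ->
   (forall y : Rn n, (forall i, Rabs (y i - p i) <= rho) -> - rho <= V y -> rho <= V y) \/
   (exists d : Rn n, (forall i, Rabs (d i) <= 1) /\
      forall y : Rn n, (forall i, Rabs (y i - p i) <= rho) -> rho <= dot d (gradV y)).
Proof.
apply: NNPP => Hno.
have Hk : forall k : nat, exists py : Rn n * Rn n,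
   (forall i, Rabs (py.1 i) <= B) /\
   (forall m, in_M0 V gradV m -> normD D (vsub py.1 m) > dEsc) /\
   (forall i, Rabs (py.2 i - py.1 i) <= / (INR k + 1)) /\
   - / (INR k + 1) <= V py.2 /\ V py.2 < / (INR k + 1) /\
   (forall d : Rn n, (forall i, Rabs (d i) <= 1) -> exists z : Rn n,
      (forall i, Rabs (z i - py.1 i) <= / (INR k + 1)) /\ dot d (gradV z) < / (INR k + 1)).
  move=> k. set r := / (INR k + 1).
  have r0 : 0 < r by apply: Rinv_0_lt_compat; have := pos_INR k; lra.
  have r1 : r <= 1. rewrite /r -Rinv_1; apply: Rinv_le_contravar; have := pos_INR k; lra.
  apply: NNPP => hk. apply: Hno. exists r; split => //; split => // p hp hf.
  apply: NNPP => hor. apply: hk.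
  have [y hy] : exists y : Rn n, (forall i, Rabs (y i - p i) <= r) /\ - r <= V y /\ V y < r.
    apply: NNPP => h. apply: hor; left => y h1 h2. apply: Rnot_lt_le => h3. apply: h. by exists y.
  exists (p, y) => /=. split => //; split => //; split; first by case: hy.
  split; first by case: hy => _ []. split; first by case: hy => _ [].
  move=> d hd. apply: NNPP => h. apply: hor; right; exists d; split => // z hz.
  apply: Rnot_lt_le => h3; apply: h; by exists z.
pose py k := proj1_sig (constructive_indefinite_description _ (Hk k)).
have Hpy := fun k => proj2_sig (constructive_indefinite_description _ (Hk k)).
pose p k := (py k).1. pose y k := (py k).2.
have [phi [Hp [q Hq]]] := BWn n p B (fun k => proj1 (Hpy k)).
have Hphi := incr_ge _ Hp.
have Hr := inv_cv0 _ Hphi.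
have Hy : CoordCv (fun k => y (phi k)) q.
  apply: (near_cv _ _ _ _ q Hq) Hr => k i. exact: (proj1 (proj2 (proj2 (Hpy (phi k)))) i).
have HVq : V q = 0.
  have hV := cont_seq _ V _ q HVc Hy.
  apply: Rle_antisym.
  - apply: (@Rle_cv_lim (fun k => V (y (phi k))) _ _ _ _ hV Hr).
    move=> k; apply: Rlt_le; exact: (proj1 (proj2 (proj2 (proj2 (proj2 (Hpy (phi k))))))).
  - have hr' : Un_cv (fun k => - / (INR (phi k) + 1)) 0.
      rewrite -Ropp_0. exact: CV_opp.
    apply: (@Rle_cv_lim _ (fun k => V (y (phi k))) _ _ _ hr' hV).
    move=> k; exact: (proj1 (proj2 (proj2 (proj2 (Hpy (phi k)))))).
have Hgq : forall i, gradV q i = 0.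
  apply: NNPP => hg.
  have [i1 hi1] : exists i, gradV q i <> 0.
    apply: NNPP => h; apply: hg => i; apply: NNPP => h'; apply: h; by exists i.
  have [i0 Hi0] := argmax _ (fun i => Rabs (gradV q i)) Hn.
  set M := Rabs (gradV q i0) in Hi0.
  have hM : 0 < M by have := Hi0 i1; have := Rabs_pos_lt _ hi1; lra.
  pose d := vscale (/ M) (gradV q).
  have hd : forall i, Rabs (d i) <= 1.
    move=> i; rewrite /d /vscale Rabs_mult Rabs_inv (Rabs_pos_eq M); last lra.
    have := Hi0 i => h. apply (Rmult_le_reg_l M) => //. field_simplify; lra.
  have Hz : forall k, exists z : Rn n, (forall i, Rabs (z i - p (phi k) i) <= / (INR (phi k) + 1)) /\
      dot d (gradV z) < / (INR (phi k) + 1).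
    move=> k. exact: (proj2 (proj2 (proj2 (proj2 (proj2 (Hpy (phi k)))))) d hd).
  pose z k := proj1_sig (constructive_indefinite_description _ (Hz k)).
  have Hz' := fun k => proj2_sig (constructive_indefinite_description _ (Hz k)).
  have Hzc : CoordCv z q.
    apply: (near_cv _ _ _ _ q Hq) Hr => k i. exact: (proj1 (Hz' k) i).
  have Hgz : CoordCv (fun k => gradV (z k)) (gradV q).
    move=> i; exact: (cont_seq _ (fun x => gradV x i) _ q (Hgc i) Hzc).
  have Hdc : CoordCv (fun _ : nat => d) d by move=> i; exact: cv_const.
  have hlim := dot_cv n _ _ _ _ Hdc Hgz.
  have h1 : dot d (gradV q) <= 0.
    apply: (@Rle_cv_lim _ _ _ _ _ hlim Hr). move=> k; apply: Rlt_le; exact: (proj2 (Hz' k)).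
  have h2 : dot d (gradV q) = / M * dot (gradV q) (gradV q) by rewrite /d dot_scale_l.
  have h3 := dot_self_ge n (gradV q) i0.
  have h4 : gradV q i0 ^ 2 = M * M.
    have e := Rsqr_abs (gradV q i0); rewrite /Rsqr in e; rewrite /M /= Rmult_1_r e; ring.
  have h5 : / M * (M * M) <= / M * dot (gradV q) (gradV q).
    apply: Rmult_le_compat_l; [apply: Rlt_le; exact: Rinv_0_lt_compat | lra].
  have : / M * (M * M) = M by field; lra.
  lra.
have HqM : in_M0 V gradV q by split.
set t := dEsc / (Kd D + 1).
have hK := Kd_ge0 n D.
have t0 : 0 < t by apply: Rdiv_lt_0_compat; lra.
have [N HN] := coordcv_unif _ _ _ Hq t t0.
have hfar := proj1 (proj2 (Hpy (phi N))) q HqM.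
have hs := normD_small n D HD (vsub (p (phi N)) q) t (Rlt_le _ _ t0)
   (fun i => Rlt_le _ _ (HN N (leqnn N) i)).
have hlt : Kd D * (t * t) < dEsc * dEsc.
  have e : Kd D * (t * t) = dEsc * dEsc * (Kd D / ((Kd D + 1) * (Kd D + 1))) by rewrite /t; field; lra.
  rewrite e. have : Kd D / ((Kd D + 1) * (Kd D + 1)) < 1.
    apply (Rmult_lt_reg_r ((Kd D + 1) * (Kd D + 1))); first nra. field_simplify; nra.
  have : 0 < dEsc * dEsc by nra. nra.
have hnn : 0 <= normD D (vsub (p (phi N)) q) by apply: sqrt_pos.
move: hfar hs. rewrite /p. set X := normD D _. move=> hfar hs.
have : dEsc * dEsc < X * X by apply: Rmult_le_0_lt_compat; lra.
have : X ^ 2 = X * X by ring. lra.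
Qed.

Lemma dconst_mul (f : R -> R) x l a : derivable_pt_lim f x l ->
  derivable_pt_lim (fun t => a * f t) x (a * l).
Proof.
move=> H. have := derivable_pt_lim_mult (fct_cte a) f x 0 l (derivable_pt_lim_const a x) H.
rewrite /fct_cte /mult_fct. have -> : 0 * f x + a * l = a * l by ring. by [].
Qed.

Lemma dmul (f g : R -> R) x lf lg : derivable_pt_lim f x lf -> derivable_pt_lim g x lg ->
  derivable_pt_lim (fun t => f t * g t) x (lf * g x + f x * lg).
Proof. move=> Hf Hg. exact: derivable_pt_lim_mult. Qed.

Lemma dbig (I : Type) (r : seq I) (f f' : I -> R -> R) x :
  (forall i, derivable_pt_lim (f i) x (f' i x)) ->
  derivable_pt_lim (fun t => \big[Rplus/0]_(i <- r) f i t) x (\big[Rplus/0]_(i <- r) f' i x).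
Proof.
move=> H; elim: r => [|a r IH].
  have -> : (fun t => \big[Rplus/0]_(i <- [::]) f i t) = fct_cte 0.
    by apply: functional_extensionality => t; rewrite big_nil.
  rewrite big_nil; exact: derivable_pt_lim_const.
have -> : (fun t => \big[Rplus/0]_(i <- a :: r) f i t) = (f a + (fun t => \big[Rplus/0]_(i <- r) f i t))%F.
  by apply: functional_extensionality => t; rewrite big_cons.
rewrite big_cons. exact: derivable_pt_lim_plus.
Qed.

Lemma sol_u1_cont n (D : Mat n) gradV (u u1 u2 : R -> Rn n) :
  is_solution D gradV u u1 u2 -> forall i x, continuity_pt (fun y => u1 y i) x.
Proof.
move=> [_ [H2 _]] i x. apply: derivable_continuous_pt. exact: (exist _ _ (H2 x i)).
Qed.

Lemma sol_u_cont n (D : Mat n) gradV (u u1 u2 : R -> Rn n) :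
  is_solution D gradV u u1 u2 -> forall i x, continuity_pt (fun y => u y i) x.
Proof.
move=> [H1 _] i x. apply: derivable_continuous_pt. exact: (exist _ _ (H1 x i)).
Qed.

Lemma d_rg n (D : Mat n) gradV (u u1 u2 : R -> Rn n) (d : Rn n) :
  is_solution D gradV u u1 u2 -> forall x,
  derivable_pt_lim (fun t => dot d (mulv D (u1 t))) x (dot d (gradV (u x))).
Proof.
move=> Hs x. have [_ [H2 H3]] := Hs.
have -> : dot d (gradV (u x)) = dot d (mulv D (u2 x)).
  rewrite /dot; apply: eq_bigr => i _; by rewrite H3.
rewrite /dot.
apply: (dbig _ (index_enum _) (fun i t => d i * mulv D (u1 t) i) (fun i t => d i * mulv D (u2 t) i)) => i.
apply: dconst_mul. rewrite /mulv.
apply: (dbig _ (index_enum _) (fun j t => D i j * u1 t j) (fun j t => D i j * u2 t j)) => j.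
apply: dconst_mul. exact: H2.
Qed.

Lemma d_rL n (D : Mat n) gradV (u u1 u2 : R -> Rn n) :
  is_solution D gradV u u1 u2 -> forall x,
  derivable_pt_lim (fun t => dot (u t) (mulv D (u1 t))) x
    (dot (u1 x) (mulv D (u1 x)) + dot (u x) (gradV (u x))).
Proof.
move=> Hs x. have [H1 [H2 H3]] := Hs.
have -> : dot (u x) (gradV (u x)) = dot (u x) (mulv D (u2 x)).
  rewrite /dot; apply: eq_bigr => i _; by rewrite H3.
rewrite /dot -bigR_split.
apply: (dbig _ (index_enum _) (fun i t => u t i * mulv D (u1 t) i)
   (fun i t => u1 t i * mulv D (u1 t) i + u t i * mulv D (u2 t) i)) => i.
apply: dmul; first exact: H1. rewrite /mulv.
apply: (dbig _ (index_enum _) (fun j t => D i j * u1 t j) (fun j t => D i j * u2 t j)) => j.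
apply: dconst_mul. exact: H2.
Qed.

Lemma FTC_gen (f f' : R -> R) : (forall x, derivable_pt_lim f x (f' x)) ->
  (forall x, continuity_pt f' x) ->
  forall a b (pr : Riemann_integrable f' a b), a <= b -> RiemannInt pr = f b - f a.
Proof.
move=> Hd Hc a b pr hab.
have diff : derivable f by move=> x; exact: (exist _ _ (Hd x)).
have he : derive f diff = f'.
  apply: functional_extensionality => x. rewrite /derive. apply: derive_pt_eq_0. exact: Hd.
have cont : continuity (derive f diff) by rewrite he => x; exact: Hc.
pose C := @mkC1 f diff cont.
have pr' : Riemann_integrable (derive C (diff0 C)) a b by rewrite /= he.
rewrite -(@RiemannInt_P33 C a b pr' hab).
apply: RiemannInt_P18 => // x _. by rewrite /= he.
Qed.

Lemma incr_bound (r r' : R -> R) a b kap : a <= b ->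
  (forall c, a <= c <= b -> derivable_pt_lim r c (r' c)) ->
  (forall c, a <= c <= b -> kap <= r' c) -> kap * (b - a) <= r b - r a.
Proof.
move=> hab Hd Hk. case: (Rle_lt_or_eq_dec _ _ hab) => h; last by subst; lra.
have [c [e hc]] := MVT_cor2 r r' a b h Hd.
rewrite e. apply: Rmult_le_compat_r; first lra. apply: Hk; lra.
Qed.

Lemma int_ge_const (f : R -> R) a b c (pr : Riemann_integrable f a b) :
  a <= b -> (forall t, a <= t <= b -> c <= f t) -> c * (b - a) <= RiemannInt pr.
Proof.
move=> hab H. rewrite -(RiemannInt_P15 (RiemannInt_P14 a b c)).
apply: RiemannInt_P19 => // t ht. rewrite /fct_cte. apply: H; lra.
Qed.

Lemma int_le_const (f : R -> R) a b c (pr : Riemann_integrable f a b) :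
  a <= b -> (forall t, a <= t <= b -> f t <= c) -> RiemannInt pr <= c * (b - a).
Proof.
move=> hab H. rewrite -(RiemannInt_P15 (RiemannInt_P14 a b c)).
apply: RiemannInt_P19 => // t ht. rewrite /fct_cte. apply: H; lra.
Qed.

Lemma int_lower3 (f : R -> R) x0 a' L lo hi (pr : Riemann_integrable f x0 (x0 + 1)) :
  x0 <= a' -> a' + L <= x0 + 1 -> 0 <= L ->
  (forall t, x0 <= t <= x0 + 1 -> lo <= f t) ->
  (forall t, a' <= t <= a' + L -> hi <= f t) ->
  hi * L + lo * (1 - L) <= RiemannInt pr.
Proof.
move=> h1 h2 h3 Hlo Hhi.
have pr1 : Riemann_integrable f x0 a' by apply: (RiemannInt_P22 pr); lra.
have pr23 : Riemann_integrable f a' (x0 + 1) by apply: (RiemannInt_P23 pr); lra.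
have pr2 : Riemann_integrable f a' (a' + L) by apply: (RiemannInt_P22 pr23); lra.
have pr3 : Riemann_integrable f (a' + L) (x0 + 1) by apply: (RiemannInt_P23 pr23); lra.
rewrite -(RiemannInt_P26 pr1 pr23) -(RiemannInt_P26 pr2 pr3).
have c1 := int_ge_const f x0 a' lo pr1 h1 (fun t ht => Hlo t ltac:(lra)).
have c2 := int_ge_const f a' (a' + L) hi pr2 ltac:(lra) Hhi.
have c3 := int_ge_const f (a' + L) (x0 + 1) lo pr3 h2 (fun t ht => Hlo t ltac:(lra)).
have e : hi * L + lo * (1 - L) = lo * (a' - x0) + (hi * (a' + L - a') + lo * (x0 + 1 - (a' + L))) by ring.
lra.
Qed.

Lemma ftc_bound (g g' h : R -> R) x0 lo hi (prh : Riemann_integrable h x0 (x0 + 1)) :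
  x0 <= lo -> lo <= hi -> hi <= x0 + 1 ->
  (forall t, derivable_pt_lim g t (g' t)) -> (forall t, continuity_pt g' t) ->
  (forall t, x0 <= t <= x0 + 1 -> Rabs (g' t) <= h t) ->
  Rabs (g hi - g lo) <= RiemannInt prh.
Proof.
move=> h1 h2 h3 Hd Hc Hb.
have prg : Riemann_integrable g' lo hi by apply: continuity_implies_RiemannInt.
rewrite -(FTC_gen g g' Hd Hc lo hi prg h2).
have prga := RiemannInt_P16 prg.
eapply Rle_trans; first by apply: (RiemannInt_P17 prg prga).
have pr1 : Riemann_integrable h x0 lo by apply: (RiemannInt_P22 prh); lra.
have pr23 : Riemann_integrable h lo (x0 + 1) by apply: (RiemannInt_P23 prh); lra.
have pr2 : Riemann_integrable h lo hi by apply: (RiemannInt_P22 pr23); lra.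
have pr3 : Riemann_integrable h hi (x0 + 1) by apply: (RiemannInt_P23 pr23); lra.
rewrite -(RiemannInt_P26 pr1 pr23) -(RiemannInt_P26 pr2 pr3).
have c1 := int_ge_const h x0 lo 0 pr1 h1 (fun t ht => Rle_trans _ _ _ (Rabs_pos _) (Hb t ltac:(lra))).
have c3 := int_ge_const h hi (x0 + 1) 0 pr3 h3 (fun t ht => Rle_trans _ _ _ (Rabs_pos _) (Hb t ltac:(lra))).
have c2 : RiemannInt prga <= RiemannInt pr2.
  apply: RiemannInt_P19 => // t ht. apply: Hb; lra.
lra.
Qed.

Lemma select_sub (r r' : R -> R) a q kap : 0 < q -> 0 <= kap ->
  (forall c, a <= c <= a + 4 * q -> derivable_pt_lim r c (r' c)) ->
  (forall c, a <= c <= a + 4 * q -> kap <= r' c) ->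
  exists a', a <= a' /\ a' + q <= a + 4 * q /\
    forall y, a' <= y <= a' + q -> kap * q <= Rabs (r y).
Proof.
move=> q0 k0 Hd Hk.
case: (Rle_dec 0 (r (a + 2 * q))) => hm.
- exists (a + 3 * q); split; [lra | split; [lra|]] => y hy.
  have := incr_bound r r' (a + 2 * q) y kap ltac:(lra) (fun c hc => Hd c ltac:(lra)) (fun c hc => Hk c ltac:(lra)).
  have : kap * q <= kap * (y - (a + 2 * q)) by apply: Rmult_le_compat_l; lra.
  move=> h1 h2. have := Rle_abs (r y). lra.
- exists a; split; [lra | split; [lra|]] => y hy.
  have := incr_bound r r' y (a + 2 * q) kap ltac:(lra) (fun c hc => Hd c ltac:(lra)) (fun c hc => Hk c ltac:(lra)).
  have : kap * q <= kap * ((a + 2 * q) - y) by apply: Rmult_le_compat_l; lra.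
  move=> h1 h2. have := Rle_abs (- r y). rewrite Rabs_Ropp. lra.
Qed.

Lemma S_lower n (D : Mat n) al (Hal : forall v : Rn n, al * dot v v <= dot v (mulv D v))
  (d w : Rn n) M t kap : 0 <= M -> 0 < t -> 0 <= al -> (forall i, Rabs (d i) <= M) ->
  Kd D * (M * t) < kap -> kap <= Rabs (dot d (mulv D w)) -> al * (t * t) <= dot w (mulv D w).
Proof.
move=> M0 t0 a0 Hd hk hr.
have [j hj] : exists j, t < Rabs (w j).
  apply: NNPP => h. have hw : forall j, Rabs (w j) <= t.
    move=> j; apply: Rnot_lt_le => h'; apply: h; by exists j.
  have := bil_bound n D d w M t M0 (Rlt_le _ _ t0) Hd hw. lra.
have h1 := dot_self_ge n w j.
have h2 : t * t <= w j ^ 2.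
  have e := Rsqr_abs (w j); rewrite /Rsqr in e. rewrite /= Rmult_1_r e.
  apply: Rmult_le_compat; lra.
have := Hal w. have : al * (t * t) <= al * dot w w by apply: Rmult_le_compat_l; lra. lra.
Qed.

Lemma grad_cont n k V (gradV : Rn n -> Rn n) : (2 <= k)%nat -> Ck n k V -> is_gradient V gradV ->
  cont_Rn V /\ forall i, cont_Rn (fun x => gradV x i).
Proof.
case: k => [//|k] _ [HV Hp] Hg. split => // i.
have [g [hg hc]] := Hp i.
have -> : (fun x => gradV x i) = g.
  apply: functional_extensionality => x. exact: uniqueness_limite (Hg i x) (hg x).
by move: hc; case: k {Hp} => [|k] [].
Qed.

Lemma coerc_use n (gradV : Rn n -> Rn n) c R0 (Hc : forall u, R0 <= vnorm u -> c <= dot u (gradV u) / (vnorm u ^ 2))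
  (w : Rn n) i0 : Rabs R0 <= Rabs (w i0) -> 0 < Rabs (w i0) -> c * dot w w <= dot w (gradV w).
Proof.
move=> h1 h2.
have hd := dot_self_ge n w i0.
have e := Rsqr_abs (w i0). rewrite /Rsqr in e.
have hw2 : Rabs (w i0) * Rabs (w i0) <= dot w w by move: hd; rewrite /= Rmult_1_r e.
have hpos : 0 < dot w w by nra.
have hv : vnorm w ^ 2 = dot w w by rewrite /vnorm /= Rmult_1_r sqrt_sqrt; lra.
have hR : R0 <= vnorm w.
  apply: Rle_trans (Rle_abs R0) _. apply: Rle_trans h1 _.
  rewrite /vnorm -(sqrt_Rsqr (Rabs (w i0))); last exact: Rabs_pos.
  apply: sqrt_le_1_alt. rewrite /Rsqr; lra.
have := Hc w hR. rewrite hv => h.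
have := Rmult_le_compat_r (dot w w) _ _ (Rlt_le _ _ hpos) h.
have -> : dot w (gradV w) / dot w w * dot w w = dot w (gradV w) by field; lra.
by [].
Qed.

Lemma lt_div_mul a b Z : 0 < Z -> a < b / Z -> a * Z < b.
Proof. move=> hZ h. have := Rmult_lt_compat_r Z _ _ hZ h. have -> : b / Z * Z = b by field; lra. by []. Qed.

Theorem mainTheorem14
  (n : nat) (Hn : (1 <= n)%nat)
  (D : Mat n) (HDsym : mat_symmetric D) (HDpos : mat_posdef D)
  (k : nat) (Hk : (2 <= k)%nat)
  (V : Rn n -> R) (gradV : Rn n -> Rn n) (HessV : Rn n -> Mat n)
  (HVk : Ck n k V) (Hgrad : is_gradient V gradV) (Hhess : is_hessian gradV HessV)
  (Hcoerc : H_coerc gradV) (Hnorm : H_norm V gradV HessV)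
  (Honly : H_only_min V gradV HessV)
  (lam_min lam_max : R)
  (Hlmin_attained : exists m, in_M0 V gradV m /\ eigenvalue (HessV m) lam_min)
  (Hlmin_min : forall m lam, in_M0 V gradV m -> eigenvalue (HessV m) lam -> lam_min <= lam)
  (Hlmax_attained : exists m, in_M0 V gradV m /\ eigenvalue (HessV m) lam_max)
  (Hlmax_max : forall m lam, in_M0 V gradV m -> eigenvalue (HessV m) lam -> lam <= lam_max)
  (dEsc : R) (HdEsc : 0 < dEsc)
  (HdEsc_small : forall m u, in_M0 V gradV m -> normD D (vsub u m) <= dEsc ->
      forall lam, eigenvalue (HessV u) lam -> lam_min / 2 <= lam <= 2 * lam_max) :
  exists deltaHam deltaLag : R, 0 < deltaHam /\ 0 < deltaLag /\
    forall u u1 u2 : R -> Rn n,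
      is_solution D gradV u u1 u2 ->
      (forall x, - deltaHam <= / 2 * (normD D (u1 x)) ^ 2 - V (u x) <= deltaHam) ->
      forall x0 : R,
        (exists x, x0 <= x <= x0 + 1 /\ in_Sigma_Esc D V gradV dEsc u x) ->
        forall pr : Riemann_integrable
                      (fun x => / 2 * (normD D (u1 x)) ^ 2 + V (u x)) x0 (x0 + 1),
          deltaLag <= RiemannInt pr.
Proof.
have [HVc Hgc] := grad_cont n k V gradV Hk HVk Hgrad.
have [al [al0 Hal]] := alpha_pos n D Hn HDpos.
have [c [R0 [c0 Hc]]] := Hcoerc.
have [R1 hR1d] : exists R1, R1 = 2 * Rabs R0 + 2 by eexists.
have hR0 := Rabs_pos R0.
have [rho [rho0 [rho1 HK]]] := Klemma n Hn D HDpos V gradV HVc Hgc dEsc HdEsc R1.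
have hKd := Kd_ge0 n D.
pose K1 := Kd D + 1.
pose t1 := rho / (16 * K1). pose t2 := c / (32 * K1).
have t10 : 0 < t1 by apply: Rdiv_lt_0_compat; rewrite /K1; lra.
have t20 : 0 < t2 by apply: Rdiv_lt_0_compat; rewrite /K1; lra.
pose sig := Rmin rho (Rmin (al * (t1 * t1)) (al * (t2 * t2))).
have sig0 : 0 < sig.
  apply: Rmin_pos => //; apply: Rmin_pos; apply: Rmult_lt_0_compat => //; nra.
have sig1 : sig <= rho by apply: Rmin_l.
have sig2 : sig <= al * (t1 * t1) by apply: Rle_trans (Rmin_r _ _) (Rmin_l _ _).
have sig3 : sig <= al * (t2 * t2) by apply: Rle_trans (Rmin_r _ _) (Rmin_r _ _).
pose dL := Rmin (sig / 16) (rho * rho * al / 2).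
have dL0 : 0 < dL by apply: Rmin_pos; [lra | have := Rmult_lt_0_compat _ _ rho0 rho0; nra].
have dL1 : dL <= sig / 16 by apply: Rmin_l.
have dL2 : dL <= rho * rho * al / 2 by apply: Rmin_r.
pose dH := Rmin (rho / 2) dL.
have dH0 : 0 < dH by apply: Rmin_pos; lra.
have dH1 : dH <= rho / 2 by apply: Rmin_l.
have dH2 : dH <= dL by apply: Rmin_r.
exists dH, dL; split => //; split => //.
move=> u u1 u2 Hs HH x0 [x [hx Hesc]] pr.
set E := (fun x => / 2 * (normD D (u1 x)) ^ 2 + V (u x)).
pose Sx t := dot (u1 t) (mulv D (u1 t)).
have HS0 : forall t, 0 <= Sx t by move=> t; exact: S_ge0.
have HEt : forall t, E t = / 2 * Sx t + V (u t) by move=> t; rewrite /E normD_sq.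
have HHt : forall t, - dH <= / 2 * Sx t - V (u t) <= dH by move=> t; rewrite /Sx -normD_sq //; exact: HH.
have [a [ha1 [ha2 ha3]]] : exists a, x0 <= a /\ a + 1/2 <= x0 + 1 /\ a <= x <= a + 1/2.
  case: (Rle_dec x (x0 + 1/2)) => h; [exists x | exists (x - 1/2)]; lra.
case: (classic (forall y, a <= y <= a + 1/2 -> forall i, Rabs (u y i - u x i) <= rho)) => Hstay;
  last first.
  have [y [hy [i hi]]] : exists y, a <= y <= a + 1/2 /\ exists i, rho < Rabs (u y i - u x i).
    apply: NNPP => h; apply: Hstay => y hy i. apply: Rnot_lt_le => h'; apply: h.
    exists y; split => //; by exists i.
  pose Z := 2 * rho * al.
  have Z0 : 0 < Z by rewrite /Z; have := Rmult_lt_0_compat _ _ rho0 al0; lra.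
  pose A0 := rho / 2 + dH / Z. pose A1 := / Z.
  have prh := RiemannInt_P10 A1 (RiemannInt_P14 x0 (x0 + 1) A0) pr.
  have Hint : RiemannInt prh = A0 * (x0 + 1 - x0) + A1 * RiemannInt pr.
    by rewrite (RiemannInt_P13 (RiemannInt_P14 x0 (x0 + 1) A0) pr prh) RiemannInt_P15.
  have Hb : forall t, x0 <= t <= x0 + 1 -> Rabs (u1 t i) <= fct_cte A0 t + A1 * E t.
    move=> t ht. rewrite /fct_cte HEt.
    have h1 := dot_self_ge n (u1 t) i.
    have h2 := Hal (u1 t).
    have h3 := HHt t.
    set z := Rabs (u1 t i).
    have ez : u1 t i ^ 2 = z * z by have e := Rsqr_abs (u1 t i); rewrite /Rsqr in e; rewrite /z /= Rmult_1_r e.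
    have hz : z * z * al <= Sx t by rewrite /Sx; nra.
    have hq : 2 * rho * z <= rho * rho + z * z by have h := Rle_0_sqr (z - rho); rewrite /Rsqr in h; nra.
    have e2 : A0 + A1 * (/ 2 * Sx t + V (u t)) = rho / 2 + (dH + (/ 2 * Sx t + V (u t))) / Z.
      rewrite /A0 /A1; field; lra.
    rewrite e2.
    have : z * z / (2 * rho) <= (dH + (/ 2 * Sx t + V (u t))) / Z.
      rewrite /Z. apply: (Rmult_le_reg_r (2 * rho * al)); first exact: Z0.
      field_simplify; try lra.
    have : z <= rho / 2 + z * z / (2 * rho).
      have e3 : rho / 2 + z * z / (2 * rho) = (rho * rho + z * z) * / (2 * rho) by field; lra.
      have e4 : z = (2 * rho * z) * / (2 * rho) by field; lra.
      have : (2 * rho * z) * / (2 * rho) <= (rho * rho + z * z) * / (2 * rho).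
        apply: Rmult_le_compat_r; [left; apply: Rinv_0_lt_compat; lra | exact hq].
      lra.
    lra.
  have hcont : forall t, continuity_pt (fun s => u1 s i) t := sol_u1_cont n D gradV u u1 u2 Hs i.
  have hder : forall t, derivable_pt_lim (fun s => u s i) t (u1 t i) by move=> t; exact: (proj1 Hs) t i.
  have hbd : rho < RiemannInt prh.
    case: (Rle_dec x y) => hxy.
    - have := ftc_bound (fun s => u s i) (fun s => u1 s i) _ x0 x y prh ltac:(lra) hxy ltac:(lra) hder hcont Hb.
      lra.
    - have := ftc_bound (fun s => u s i) (fun s => u1 s i) _ x0 y x prh ltac:(lra) ltac:(lra) ltac:(lra) hder hcont Hb.
      rewrite Rabs_minus_sym. lra.
  move: hbd; rewrite Hint /A0 /A1 => hbd.
  have : rho / 2 < (dH + RiemannInt pr) / Z.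
    have e : (dH + RiemannInt pr) / Z = dH / Z + / Z * RiemannInt pr by field; lra.
    lra.
  move/(lt_div_mul _ _ _ Z0). rewrite /Z => h. have e : rho / 2 * (2 * rho * al) = rho * rho * al by field. rewrite e in h. move: h dL2 dH2. set X := rho * rho * al. clearbody X. move: (RiemannInt pr) => I. clearbody dH dL. lra.
suff [a' [h1 [h2 Hsub]]] : exists a', x0 <= a' /\ a' + 1/8 <= x0 + 1 /\
    forall t, a' <= t <= a' + 1/8 -> sig <= Sx t.
  have := int_lower3 E x0 a' (1/8) (- dH) (sig - dH) pr h1 h2 ltac:(lra)
    (fun t _ => ltac:(rewrite HEt; have := HHt t; have := HS0 t; lra))
    (fun t ht => ltac:(rewrite HEt; have := HHt t; have := Hsub t ht; lra)).
  lra.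
case: (classic (forall i, Rabs (u x i) <= R1)) => Hbd.
- case: (HK (u x) Hbd Hesc) => [HD1 | [d [hd HD2]]].
  + exists a; split => //; split; first lra.
    move=> t ht. have hv : rho <= V (u t).
      apply: HD1 => [i|]; first by apply: Hstay; lra.
      have := HHt t; have := HS0 t; lra.
    have := HHt t; lra.
  + have hdr : forall c', a <= c' <= a + 4 * (1/8) ->
       derivable_pt_lim (fun t => dot d (mulv D (u1 t))) c' ((fun t => dot d (gradV (u t))) c').
      move=> c' _; exact: d_rg Hs c'.
    have hkr : forall c', a <= c' <= a + 4 * (1/8) -> rho <= (fun t => dot d (gradV (u t))) c'.
      move=> c' hc'; apply: HD2 => i; apply: Hstay; lra.
    have [a' [h1 [h2 Hr]]] := select_sub _ _ a (1/8) rho ltac:(lra) ltac:(lra) hdr hkr.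
    exists a'; split; first lra; split; first lra.
    move=> t ht. apply: Rle_trans sig2 _.
    apply: (S_lower n D al Hal d (u1 t) 1 t1 (rho * (1/8))) => //; try lra.
    rewrite /t1 /K1. have e : Kd D * (1 * (rho / (16 * (Kd D + 1)))) = rho * (1/8) * (Kd D / (2 * (Kd D + 1))).
      field; lra.
    rewrite e. have : Kd D / (2 * (Kd D + 1)) < 1.
      apply: (Rmult_lt_reg_r (2 * (Kd D + 1))); first lra. field_simplify; lra.
    nra.
    exact: Hr.
- have [i1 hi1] : exists i, R1 < Rabs (u x i).
    apply: NNPP => h; apply: Hbd => i; apply: Rnot_lt_le => h'; apply: h; by exists i.
  have [i0 Hi0] := argmax _ (fun i => Rabs (u x i)) Hn.
  have [P hPd] : exists P, P = Rabs (u x i0) by eexists.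
  rewrite -hPd in Hi0.
  have hP : R1 < P by have := Hi0 i1; lra.
  have hR1 : 2 <= R1 by lra.
  have hnear : forall t, a <= t <= a + 1/2 -> forall i, Rabs (u t i - u x i) <= rho.
    move=> t ht i; exact: Hstay.
  have hui0 : forall t, a <= t <= a + 1/2 -> P - rho <= Rabs (u t i0).
    move=> t ht. have h := hnear t ht i0. have := Rabs_triang (u x i0 - u t i0) (u t i0).
    have -> : u x i0 - u t i0 + u t i0 = u x i0 by ring. rewrite Rabs_minus_sym. lra.
  have hkr : forall c', a <= c' <= a + 4 * (1/8) ->
      c * (P * P / 4) <= (fun t => Sx t + dot (u t) (gradV (u t))) c'.
    move=> c' hc'. have hu := hui0 c' ltac:(lra).
    have hcu := coerc_use n gradV c R0 Hc (u c') i0 ltac:(lra) ltac:(lra).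
    have := dot_self_ge n (u c') i0. have e := Rsqr_abs (u c' i0). rewrite /Rsqr in e.
    rewrite /= Rmult_1_r e => hd.
    have : P * P / 4 <= Rabs (u c' i0) * Rabs (u c' i0) by nra.
    have := HS0 c'. move=> h0 h4 /=. nra.
  have hdr : forall c', a <= c' <= a + 4 * (1/8) ->
       derivable_pt_lim (fun t => dot (u t) (mulv D (u1 t))) c' ((fun t => Sx t + dot (u t) (gradV (u t))) c').
    move=> c' _; exact: d_rL Hs c'.
  have hkap : 0 <= c * (P * P / 4) by apply: Rmult_le_pos; nra.
  have [a' [h1 [h2 Hr]]] := select_sub _ _ a (1/8) _ ltac:(lra) hkap hdr hkr.
  exists a'; split; first lra; split; first lra.
  move=> t ht. apply: Rle_trans sig3 _.
  pose tt := c * P / (64 * K1).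
  have htt : t2 <= tt.
    have e : tt = t2 * (P / 2) by rewrite /tt /t2 /K1; field; lra.
    rewrite e. have : 1 <= P / 2 by lra. have := t20. move: (P / 2) => Q. clearbody t2. nra.
  apply: Rle_trans (_ : al * (tt * tt) <= _).
    apply: Rmult_le_compat_l; [lra | apply: Rmult_le_compat; lra].
  apply: (S_lower n D al Hal (u t) (u1 t) (2 * P) tt (c * (P * P / 4) * (1/8))); try lra.
  + move=> i. have := hnear t ltac:(lra) i. have := Hi0 i.
    have := Rabs_triang (u t i - u x i) (u x i). have -> : u t i - u x i + u x i = u t i by ring. lra.
  + rewrite /tt /K1.
    have e : Kd D * (2 * P * (c * P / (64 * (Kd D + 1)))) = c * (P * P / 4) * (1/8) * (Kd D / (Kd D + 1)).
      field; lra.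
    rewrite e. have : Kd D / (Kd D + 1) < 1.
      apply: (Rmult_lt_reg_r (Kd D + 1)); first lra. field_simplify; lra.
    have hPP : 0 < P * P by apply: Rmult_lt_0_compat; lra.
    have : 0 < c * (P * P / 4) * (1/8) by apply: Rmult_lt_0_compat; [apply: Rmult_lt_0_compat; lra | lra].
    nra.
  + exact: Hr.
Qed.
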